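(* $c(8)\ge 6$.
   Context: $\mathbb{F}_q$ is the finite field with $q$ elements. Hamming distance $d(u,v)=|\{i:u_i\ne v_i\}|$ on $\mathbb{F}_q^3$; $B(u)=\{v:d(u,v)\le1\}$; $E(u)=\bigcup_{\lambda\in\mathbb{F}_q}B(\lambda u)$. A set $\mathcal{H}\subseteq\mathbb{F}_q^3$ is a short covering if $\bigcup_{h\in\mathcal{H}}E(h)=\mathbb{F}_q^3$; $c(q)$ is the minimum cardinality of a short covering of $\mathbb{F}_q^3$. *)

(* Defs.v *)
From mathcomp Require Import all_boot all_algebra all_field.
Set Implicit Arguments. Unset Strict Implicit. Unset Printing Implicit Defensive.
Import GRing.Theory.
Local Open Scope ring_scope.

Definition vec3 (F : finFieldType) := {ffun 'I_3 -> F}.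

Definition hdist (F : finFieldType) (u v : vec3 F) : nat :=
  #|[set i : 'I_3 | u i != v i]|.

Definition ball1 (F : finFieldType) (u : vec3 F) : {set vec3 F} :=
  [set v : vec3 F | (hdist u v <= 1)%N].

Definition vscale (F : finFieldType) (l : F) (u : vec3 F) : vec3 F :=
  [ffun i => l * u i].

Definition Eset (F : finFieldType) (u : vec3 F) : {set vec3 F} :=
  \bigcup_(l : F) ball1 (vscale l u).

Definition short_covering (F : finFieldType) (H : {set vec3 F}) : Prop :=
  \bigcup_(h in H) Eset h = [set: vec3 F].

(* Main.v *)
Require Import Defs.
From mathcomp Require Import all_boot all_algebra all_field.
From mathcomp Require Import zify.
Set Implicit Arguments. Unset Strict Implicit. Unset Printing Implicit Defensive.
Import GRing.Theory.

Definition o0 : 'I_3 := @Ordinal 3 0 isT.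
Definition o1 : 'I_3 := @Ordinal 3 1 isT.
Definition o2 : 'I_3 := @Ordinal 3 2 isT.

Lemma ord3P (t : 'I_3) : t = o0 \/ t = o1 \/ t = o2.
Proof.
case: t => [[|[|[|n]]] Ht].
- by left; apply: val_inj.
- by right; left; apply: val_inj.
- by right; right; apply: val_inj.
- by [].
Qed.

Lemma agree (F : finFieldType) (u v : vec3 F) :
  (hdist u v <= 1)%N -> exists m, forall t, t != m -> v t = u t.
Proof.
rewrite /hdist => Hd.
case: (set_0Vmem [set i : 'I_3 | u i != v i]) => [E|[m Hm]].
- exists o0 => t _.
  by have := in_set0 t; rewrite -E inE => /negbFE /eqP ->.
- exists m => t Htm. apply/eqP; rewrite eq_sym; apply: contraT => Ht.
  have Hsub : [set m; t] \subset [set i : 'I_3 | u i != v i].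
    by move: Hm; rewrite inE => Hm; apply/subsetP => x; rewrite !inE => /orP [] /eqP ->.
  have Hmt : m != t by rewrite eq_sym.
  have := subset_leq_card Hsub; rewrite cards2 Hmt => H2.
  by have := leq_trans H2 Hd.
Qed.

Lemma cover (F : finFieldType) (H : {set vec3 F}) (hH : short_covering H)
  (v : vec3 F) : exists h l m, h \in H /\ forall t, t != m -> v t = (l * h t)%R.
Proof.
have : v \in \bigcup_(h in H) Eset h by rewrite hH inE.
case/bigcupP => h hin; rewrite /Eset => /bigcupP [l _].
rewrite /ball1 inE => /agree [m Hm].
exists h, l, m; split => // t /Hm ->; by rewrite ffunE.
Qed.

Local Open Scope ring_scope.

Definition Sset (F : finFieldType) (H : {set vec3 F}) (a b : 'I_3) :=
  [set h in H | (h a != 0) && (h b != 0)].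
Definition Rset (F : finFieldType) (H : {set vec3 F}) (a b : 'I_3) :=
  [set (h : vec3 F) b / h a | h in Sset H a b].

Lemma Sset_sym (F : finFieldType) (H : {set vec3 F}) a b : Sset H a b = Sset H b a.
Proof. apply/setP => h; rewrite !inE; congr (_ && _); exact: andbC. Qed.

Lemma Sset_sub (F : finFieldType) (H : {set vec3 F}) a b : (#|Sset H a b| <= #|H|)%N.
Proof. apply: subset_leq_card; apply/subsetP => h; by rewrite inE => /andP[]. Qed.

Lemma missing (F : finFieldType) (hF : #|F| = 8%N) (H : {set vec3 F}) a b
  (hs : (#|H| < 7)%N) : exists rho : F, rho != 0 /\ rho \notin Rset H a b.
Proof.
have hR : (#|Rset H a b| <= #|H|)%N := leq_trans (leq_imset_card _ _) (Sset_sub _ _ _).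
have : ~~ ([set~ (0:F)] \subset Rset H a b).
  apply/negP => /subset_leq_card; rewrite cardsC1 hF /= => H7. move: hR; rewrite /= => hR; have := leq_trans H7 hR; clear -hs; move=> X. by rewrite ltnNge X in hs.
case/subsetPn => rho; rewrite in_setC1 => hr hnr. by exists rho.
Qed.

Lemma nz_mul (F : finFieldType) (a b c : F) : c != 0 -> c = a * b -> a != 0 /\ b != 0.
Proof. by move=> hc e; move: hc; rewrite e mulf_eq0 negb_or => /andP[]. Qed.

Lemma inv_of (F : finFieldType) (l x c : F) : x != 0 -> c = l * x -> l = c / x.
Proof. by move=> hx ->; rewrite mulfK. Qed.

Lemma core (F : finFieldType) (H : {set vec3 F}) (hH : short_covering H)
  (i j k : 'I_3) (hij : i != j) (hik : i != k) (hjk : j != k)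
  (hall : forall t, t = i \/ t = j \/ t = k) (rho : F) (hr : rho != 0)
  (hnr : rho \notin Rset H i j) (s : F) :
  exists h l, h \in H /\ s = l * h k /\ (1 = l * h i \/ rho = l * h j).
Proof.
pose v : vec3 F := [ffun t => if t == i then 1 else if t == j then rho else s].
have vi : v i = 1 by rewrite ffunE eqxx.
have vj : v j = rho by rewrite ffunE eq_sym (negbTE hij) eqxx.
have vk : v k = s by rewrite ffunE eq_sym (negbTE hik) eq_sym (negbTE hjk).
have hki : k != i by rewrite eq_sym.
have hkj : k != j by rewrite eq_sym.
have hji : j != i by rewrite eq_sym.
have [h [l [m [hin hm]]]] := cover hH v.
exists h, l; split => //.
case: (hall m) => [e | [e | e]]; subst m.
- split; first by rewrite -vk hm.
  by right; rewrite -vj hm.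
- split; first by rewrite -vk hm.
  by left; rewrite -vi hm.
- exfalso; move/negP: hnr; apply.
  have e1 : 1 = l * h i by rewrite -vi hm // eq_sym.
  have e2 : rho = l * h j by rewrite -vj hm // eq_sym.
  have [_ hi0] := nz_mul (oner_neq0 F) e1.
  have [_ hj0] := nz_mul hr e2.
  have hl := inv_of hi0 e1.
  apply/imsetP; exists h; first by rewrite inE hin hi0 hj0.
  by rewrite e2 hl mul1r mulrC.
Qed.

Lemma lemA (F : finFieldType) (hF : #|F| = 8%N) (H : {set vec3 F})
  (hH : short_covering H) (hs : (#|H| < 7)%N)
  (i j k : 'I_3) (hij : i != j) (hik : i != k) (hjk : j != k)
  (hall : forall t, t = i \/ t = j \/ t = k) :
  (7 <= #|Sset H i k| + #|Sset H j k|)%N.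
Proof.
have [rho [hr hnr]] := missing hF i j hs.
have sub : [set~ (0:F)] \subset Rset H i k :|: [set rho * x | x in Rset H j k].
  apply/subsetP => s; rewrite in_setC1 => hs0.
  have [h [l [hin [es [e1|e2]]]]] := core hH hij hik hjk hall hr hnr s.
  - have [_ hi0] := nz_mul (oner_neq0 F) e1.
    have [_ hk0] := nz_mul hs0 es.
    have hl := inv_of hi0 e1.
    rewrite inE; apply/orP; left; apply/imsetP; exists h.
      by rewrite inE hin hi0 hk0.
    by rewrite es hl mul1r mulrC.
  - have [_ hj0] := nz_mul hr e2.
    have [_ hk0] := nz_mul hs0 es.
    have hl := inv_of hj0 e2.
    rewrite inE; apply/orP; right; apply/imsetP; exists (h k / h j).
      by apply/imsetP; exists h; rewrite // inE hin hj0 hk0.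
    by rewrite es hl -mulrA (mulrC _ (h k)).
have := subset_leq_card sub; rewrite cardsC1 hF /= => h7.
have hU := leq_card_setU (Rset H i k) [set rho * x | x in Rset H j k].
have hU' : (#|Rset H i k :|: [set (rho * x)%R | x in Rset H j k]|
   <= #|Rset H i k| + #|[set (rho * x)%R | x in Rset H j k]|)%N by case: hU.
have h1 : (#|[set (rho * x)%R | x in Rset H j k]| <= #|Rset H j k|)%N := leq_imset_card _ _.
have h2 : (#|Rset H j k| <= #|Sset H j k|)%N := leq_imset_card _ _.
have h3 : (#|Rset H i k| <= #|Sset H i k|)%N := leq_imset_card _ _.
exact: leq_trans h7 (leq_trans hU' (leq_add h3 (leq_trans h1 h2))).
Qed.

Lemma lemB (F : finFieldType) (hF : #|F| = 8%N) (H : {set vec3 F})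
  (hH : short_covering H) (hs : (#|H| < 7)%N)
  (i j k : 'I_3) (hij : i != j) (hik : i != k) (hjk : j != k)
  (hall : forall t, t = i \/ t = j \/ t = k) :
  exists h, h \in H /\ h k = 0 /\ (h i != 0 \/ h j != 0).
Proof.
have [rho [hr hnr]] := missing hF i j hs.
have [h [l [hin [es [e1|e2]]]]] := core hH hij hik hjk hall hr hnr 0.
- have [hl0 hi0] := nz_mul (oner_neq0 F) e1.
  exists h; split => //; split; last by left.
  by move/eqP: es; rewrite eq_sym mulf_eq0 (negbTE hl0) /= => /eqP.
- have [hl0 hj0] := nz_mul hr e2.
  exists h; split => //; split; last by right.
  by move/eqP: es; rewrite eq_sym mulf_eq0 (negbTE hl0) /= => /eqP.
Qed.

Lemma card_Sset (F : finFieldType) (H : {set vec3 F}) a b :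
  #|Sset H a b| = (\sum_(h in H) ((h a != 0%R) && (h b != 0%R)))%N.
Proof.
rewrite -sum1_card.
rewrite (eq_bigl (fun h => (h \in H) && ((h a != 0) && (h b != 0)))); last first.
  by move=> h; rewrite inE.
rewrite big_mkcondr /=; apply: eq_bigr => h _.
by case: ((h a != 0) && (h b != 0)).
Qed.

Lemma sum_ge1 (T : finType) (A : {set T}) (P : T -> bool) z :
  z \in A -> P z -> (1 <= \sum_(h in A) P h)%N.
Proof. by move=> zA Pz; rewrite (bigD1 z) //= Pz. Qed.

Lemma sum_ge2 (T : finType) (A : {set T}) (P : T -> bool) a b :
  a \in A -> b \in A -> a != b -> P a -> P b -> (2 <= \sum_(h in A) P h)%N.
Proof.
move=> aA bA ab Pa Pb; rewrite (bigD1 a) //= (bigD1 b) /=; last first.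
  by rewrite bA eq_sym ab.
by rewrite Pa Pb addnA leq_addr.
Qed.

Theorem proposition21 (F : finFieldType) (hF : #|F| = 8%N)
  (H : {set vec3 F}) (hH : short_covering H) : (6 <= #|H|)%N.
Proof.
rewrite leqNgt; apply/negP => hlt.
have hs : (#|H| < 7)%N by lia.
have d01 : o0 != o1 by []. have d02 : o0 != o2 by []. have d12 : o1 != o2 by [].
have A1 := lemA hF hH hs d01 d02 d12 (fun t => ord3P t).
have A2 := lemA hF hH hs d02 d01 (negbT (erefl false) : o2 != o1)
  (fun t => ltac:(case: (ord3P t) => [|[|]]; tauto)).
have A3 := lemA hF hH hs d12 (negbT (erefl false) : o1 != o0)
  (negbT (erefl false) : o2 != o0)
  (fun t => ltac:(case: (ord3P t) => [|[|]]; tauto)).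
rewrite (Sset_sym H o2 o1) in A2.
rewrite (Sset_sym H o1 o0) (Sset_sym H o2 o0) in A3.
have [z0 [z0H [z00 z0n]]] := lemB hF hH hs d12 (negbT (erefl false) : o1 != o0)
  (negbT (erefl false) : o2 != o0)
  (fun t => ltac:(case: (ord3P t) => [|[|]]; tauto)).
have [z1 [z1H [z11 z1n]]] := lemB hF hH hs d02 d01 (negbT (erefl false) : o2 != o1)
  (fun t => ltac:(case: (ord3P t) => [|[|]]; tauto)).
have [z2 [z2H [z22 z2n]]] := lemB hF hH hs d01 d02 d12 (fun t => ord3P t).
rewrite !card_Sset in A1 A2 A3.
pose nf (h : vec3 F) := [|| h o0 == 0, h o1 == 0 | h o2 == 0].
pose c0 (h : vec3 F) := (h o0 == 0) && ((h o1 != 0) || (h o2 != 0)).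
pose c1 (h : vec3 F) := (h o1 == 0) && ((h o0 != 0) || (h o2 != 0)).
pose c2 (h : vec3 F) := (h o2 == 0) && ((h o0 != 0) || (h o1 != 0)).
have pw : forall h : vec3 F,
  (((h o0 != 0%R) && (h o1 != 0%R)) + ((h o0 != 0%R) && (h o2 != 0%R))
   + ((h o1 != 0%R) && (h o2 != 0%R)) + nf h + c0 h + c1 h + c2 h <= 3)%N.
  move=> h; rewrite /nf /c0 /c1 /c2.
  by case: (h o0 == 0); case: (h o1 == 0); case: (h o2 == 0).
have tot : (\sum_(h in H) (((h o0 != 0%R) && (h o1 != 0%R)) + ((h o0 != 0%R) && (h o2 != 0%R))
   + ((h o1 != 0%R) && (h o2 != 0%R)) + nf h + c0 h + c1 h + c2 h) <= \sum_(h in H) 3)%N.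
  by apply: leq_sum => h _; exact: pw.
rewrite sum_nat_const !big_split /= in tot.
have C0 : (1 <= \sum_(h in H) c0 h)%N.
  apply: (sum_ge1 z0H); rewrite /c0 z00 eqxx /=.
  by case: z0n => ->; rewrite ?orbT.
have C1 : (1 <= \sum_(h in H) c1 h)%N.
  apply: (sum_ge1 z1H); rewrite /c1 z11 eqxx /=.
  by case: z1n => ->; rewrite ?orbT.
have C2 : (1 <= \sum_(h in H) c2 h)%N.
  apply: (sum_ge1 z2H); rewrite /c2 z22 eqxx /=.
  by case: z2n => ->; rewrite ?orbT.
have N2 : (2 <= \sum_(h in H) nf h)%N.
  case: (eqVneq z0 z1) => [e|ne].
  - subst z1.
    have ne : z0 != z2.
      apply/eqP => e; subst z2.
      by case: z2n => /eqP; rewrite ?z00 ?z11.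
    apply: (sum_ge2 z0H z2H ne); by rewrite /nf ?z00 ?z22 eqxx ?orbT.
  - apply: (sum_ge2 z0H z1H ne); by rewrite /nf ?z00 ?z11 eqxx ?orbT.
move: A1 A2 A3 tot C0 C1 C2 N2 hlt.
move: (\sum_(h in H) ((h o0 != 0%R) && (h o1 != 0%R)))%N => s01.
move: (\sum_(h in H) ((h o0 != 0%R) && (h o2 != 0%R)))%N => s02.
move: (\sum_(h in H) ((h o1 != 0%R) && (h o2 != 0%R)))%N => s12.
move: (\sum_(h in H) nf h)%N => sn.
move: (\sum_(h in H) c0 h)%N => t0.
move: (\sum_(h in H) c1 h)%N => t1.
move: (\sum_(h in H) c2 h)%N => t2.
move: #|H| => n.
move=> *; lia.
Qed.
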